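(* Let $A$ be a factorizable ribbon Hopf algebra with ribbon element $v$. Then for all $a\in A$, $\underline{S}^2(a)=S(v_{(1)})\,a\,v_{(2)}$, i.e. $\underline S^2$ is the right adjoint action of $v$.
   Context: Let $K$ be a field and $A$ a finite-dimensional Hopf algebra over $K$ with coproduct $\Delta(a)=a_{(1)}\otimes a_{(2)}$, counit $\varepsilon$ and bijective antipode $S$. $A$ is quasitriangular with R-matrix $R=R_1\otimes R_2$ ($R'$ a second copy): $R$ invertible, $\Delta^{\mathrm{cop}}(a)=R\Delta(a)R^{-1}$, $(\Delta\otimes\mathrm{id})(R)=R_{13}R_{23}$, $(\mathrm{id}\otimes\Delta)(R)=R_{13}R_{12}$. Monodromy matrix $Q=\tau(R)R=R_2R'_1\otimes R_1R'_2=Q_1\otimes Q_2$. Drinfel'd element $u=S(R_2)R_1$. A ribbon element (convention of this paper) is a central invertible $v\in A$ with $S(v)=v$, $\varepsilon(v)=1$, $v^2=(uS(u))^{-1}$ and $\Delta(v)=(v\otimes v)Q$. $A$ is factorizable if $A^*\to A$, $\varphi\mapsto\varphi(Q_1)Q_2$ is bijective. The transmutation antipode is $\underline{S}(a)=S\big(S(R_{1(1)})aR_{1(2)}\big)R_2$, equivalently $\underline{S}(a)=R_1S(a)S(R_2)S(u^{-1})$. *)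

(* Defs.v *)
(* A finite-dimensional Hopf algebra over a field K is
   presented in coordinates: A = K^n with basis e_0..e_{n-1}, elements of A
   are row vectors 'rV[K]_n, elements of A(x)A are n x n matrices
   (T i j = coefficient of e_i (x) e_j), elements of A(x)A(x)A are
   finite functions i |-> matrix (T i j k = coefficient of e_i(x)e_j(x)e_k). *)
From HB Require Import structures.
From mathcomp Require Import all_boot all_order all_algebra.
Set Implicit Arguments. Unset Strict Implicit. Unset Printing Implicit Defensive.
Import GRing.Theory.
Local Open Scope ring_scope.

Record HopfData (K : fieldType) (n : nat) := {
  hmul : 'I_n -> 'I_n -> 'rV[K]_n;
  hunit : 'rV[K]_n;
  hcop : 'I_n -> 'M[K]_n;
  hcounit : 'I_n -> K;
  hanti : 'I_n -> 'rV[K]_n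
}.

Section Hopf.
Variables (K : fieldType) (n : nat) (H : HopfData K n).

Notation A := 'rV[K]_n.
Notation A2 := 'M[K]_n.
Notation A3 := {ffun 'I_n -> 'M[K]_n}.

Definition ebas (i : 'I_n) : A := delta_mx 0 i.

Definition mulA (a b : A) : A :=
  \sum_(i < n) \sum_(j < n) (a 0 i * b 0 j) *: hmul H i j.
Definition oneA : A := hunit H.
Definition Delta (a : A) : A2 := \sum_(i < n) a 0 i *: hcop H i.
Definition eps (a : A) : K := \sum_(i < n) a 0 i * hcounit H i.
Definition Sant (a : A) : A := \sum_(i < n) a 0 i *: hanti H i.

Definition tens (x y : A) : A2 := x^T *m y.
Definition tens3 (x y z : A) : A3 := [ffun i => x 0 i *: tens y z].
(* M (x) z and x (x) M for M in A(x)A *)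
Definition t2x (M : A2) (z : A) : A3 := [ffun i => (row i M)^T *m z].
Definition xt2 (x : A) (M : A2) : A3 := [ffun i => x 0 i *: M].

Definition one2 : A2 := tens oneA oneA.
Definition mul2 (T U : A2) : A2 :=
  \sum_(i < n) \sum_(j < n) \sum_(k < n) \sum_(l < n)
     (T i j * U k l) *: tens (hmul H i k) (hmul H j l).
Definition mul3 (T U : A3) : A3 :=
  \sum_(i < n) \sum_(j < n) \sum_(k < n)
  \sum_(i' < n) \sum_(j' < n) \sum_(k' < n)
     (T i j k * U i' j' k') *: tens3 (hmul H i i') (hmul H j j') (hmul H k k').

Definition leg12 (T : A2) : A3 :=
  \sum_(i < n) \sum_(j < n) T i j *: tens3 (ebas i) (ebas j) oneA.
Definition leg13 (T : A2) : A3 :=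
  \sum_(i < n) \sum_(j < n) T i j *: tens3 (ebas i) oneA (ebas j).
Definition leg23 (T : A2) : A3 :=
  \sum_(i < n) \sum_(j < n) T i j *: tens3 oneA (ebas i) (ebas j).

Definition Delta_id (T : A2) : A3 :=
  \sum_(i < n) \sum_(j < n) T i j *: t2x (Delta (ebas i)) (ebas j).
Definition id_Delta (T : A2) : A3 :=
  \sum_(i < n) \sum_(j < n) T i j *: xt2 (ebas i) (Delta (ebas j)).

Definition is_hopf : Prop :=
  (forall a b c, mulA (mulA a b) c = mulA a (mulA b c))
  /\ (forall a, mulA oneA a = a /\ mulA a oneA = a)
  /\ (forall a, Delta_id (Delta a) = id_Delta (Delta a))
  /\ (forall a, \sum_(i < n) \sum_(j < n) (Delta a i j * eps (ebas i)) *: ebas j = a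
              /\ \sum_(i < n) \sum_(j < n) (Delta a i j * eps (ebas j)) *: ebas i = a)
  /\ ((forall a b, Delta (mulA a b) = mul2 (Delta a) (Delta b)) /\ Delta oneA = one2)
  /\ ((forall a b, eps (mulA a b) = eps a * eps b) /\ eps oneA = 1)
  /\ (forall a,
          \sum_(i < n) \sum_(j < n) Delta a i j *: mulA (Sant (ebas i)) (ebas j) = eps a *: oneA
       /\ \sum_(i < n) \sum_(j < n) Delta a i j *: mulA (ebas i) (Sant (ebas j)) = eps a *: oneA)
  /\ bijective Sant.

Definition quasitriangular (R : A2) : Prop :=
  (exists Rinv : A2,
      [/\ mul2 R Rinv = one2, mul2 Rinv R = one2
        & forall a, (Delta a)^T = mul2 (mul2 R (Delta a)) Rinv])
  /\ Delta_id R = mul3 (leg13 R) (leg23 R)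
  /\ id_Delta R = mul3 (leg13 R) (leg12 R).

Definition monodromy (R : A2) : A2 := mul2 R^T R.

Definition drinfeld_u (R : A2) : A :=
  \sum_(i < n) \sum_(j < n) R i j *: mulA (Sant (ebas j)) (ebas i).

Definition inverse_of (x y : A) : Prop := mulA x y = oneA /\ mulA y x = oneA.

(* ribbon element (convention of the paper) *)
Definition ribbon (R : A2) (v : A) : Prop :=
  (forall a, mulA v a = mulA a v)
  /\ (exists w, inverse_of v w)
  /\ Sant v = v
  /\ eps v = 1
  /\ inverse_of (mulA (drinfeld_u R) (Sant (drinfeld_u R))) (mulA v v)
  /\ Delta v = mul2 (tens v v) (monodromy R).

(* linear functionals on A (elements of the dual space), given by their values on the
   basis: phi(e_i) = phi 0 i *)
Definition dual_eval (phi : 'rV[K]_n) (x : A) : K := \sum_(i < n) phi 0 i * x 0 i.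

Definition drinfeld_map (R : A2) (phi : 'rV[K]_n) : A :=
  \sum_(i < n) \sum_(j < n) (monodromy R i j * dual_eval phi (ebas i)) *: ebas j.

Definition factorizable (R : A2) : Prop := bijective (drinfeld_map R).

(* transmutation antipode S_(a) = S( S(R_{1(1)}) a R_{1(2)} ) R_2 *)
Definition transm_S (R : A2) (a : A) : A :=
  \sum_(i < n) \sum_(j < n) R i j *:
    \sum_(k < n) \sum_(l < n) Delta (ebas i) k l *:
       mulA (Sant (mulA (mulA (Sant (ebas k)) a) (ebas l))) (ebas j).

Definition right_adj (v a : A) : A :=
  \sum_(i < n) \sum_(j < n) Delta v i j *: mulA (mulA (Sant (ebas i)) a) (ebas j).

End Hopf.

(* Main.v *)
Require Import Defs.
From HB Require Import structures.
From mathcomp Require Import all_boot all_order all_algebra.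
From mathcomp Require Import ring.
Set Implicit Arguments. Unset Strict Implicit. Unset Printing Implicit Defensive.
Import GRing.Theory.
Local Open Scope ring_scope.

Section Gen.
Variable K : fieldType.

Definition lin (U V : lmodType K) (f : U -> V) :=
  forall (c : K) x y, f (c *: x + y) = c *: f x + f y.

Lemma lin0 (U V : lmodType K) (f : U -> V) : lin f -> f 0 = 0.
Proof.
move=> hf; have h := hf 1 0 0; rewrite scaler0 add0r scale1r in h.
by apply: (addrI (f 0)); rewrite addr0 -h.
Qed.

Lemma linD (U V : lmodType K) (f : U -> V) : lin f -> forall x y, f (x + y) = f x + f y.
Proof. by move=> hf x y; rewrite -[x]scale1r hf !scale1r. Qed.

Lemma linZ (U V : lmodType K) (f : U -> V) : lin f -> forall c x, f (c *: x) = c *: f x.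
Proof. by move=> hf c x; rewrite -[c *: x]addr0 hf (lin0 hf) addr0. Qed.

Lemma lin_sum (U V : lmodType K) (f : U -> V) : lin f ->
  forall (I : Type) (r : seq I) (P : pred I) (F : I -> U),
  f (\sum_(i <- r | P i) F i) = \sum_(i <- r | P i) f (F i).
Proof.
move=> hf I r P F; apply: (big_morph f); [exact: linD | exact: lin0].
Qed.

Lemma lin_expand n (V : lmodType K) (f : 'rV[K]_n -> V) : lin f ->
  forall x, f x = \sum_(i < n) x 0 i *: f (delta_mx 0 i).
Proof.
move=> hf x; rewrite {1}(row_sum_delta x) (lin_sum hf).
by apply: eq_bigr => i _; rewrite (linZ hf).
Qed.

Lemma lin_id (U : lmodType K) : lin (fun x : U => x).
Proof. by []. Qed.

Lemma lin_comp (U V W : lmodType K) (F : U -> V) (G : V -> W) :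
  lin F -> lin G -> lin (fun x => G (F x)).
Proof. by move=> hF hG c x y; rewrite hF hG. Qed.

Lemma lin_Z (U V : lmodType K) (F : U -> V) (a : K) : lin F -> lin (fun x => a *: F x).
Proof. by move=> hF c x y; rewrite hF scalerDr !scalerA mulrC. Qed.

Lemma lin_D (U V : lmodType K) (F G : U -> V) : lin F -> lin G -> lin (fun x => F x + G x).
Proof.
move=> hF hG c x y; rewrite hF hG scalerDr.
by rewrite -!addrA; congr (_ + _); rewrite addrC -addrA; congr (_ + _); rewrite addrC.
Qed.

End Gen.

Section Hop.
Variables (K : fieldType) (n : nat) (H : HopfData K n).
Local Notation A := 'rV[K]_n.
Local Notation m := (Defs.mulA H).
Local Notation S := (Sant H).
Local Notation D := (Delta H).
Local Notation ep := (eps H).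
Local Notation one := (oneA H).
Local Notation e := (@ebas K n).

Lemma lin_mull z : lin (fun x : A => m x z).
Proof.
move=> c x y; rewrite /Defs.mulA scaler_sumr -big_split; apply: eq_bigr => i _.
rewrite scaler_sumr -big_split; apply: eq_bigr => j _ /=.
by rewrite !mxE scalerA -scalerDl; congr (_ *: _); ring.
Qed.

Lemma lin_mulr z : lin (fun x : A => m z x).
Proof.
move=> c x y; rewrite /Defs.mulA scaler_sumr -big_split; apply: eq_bigr => i _.
rewrite scaler_sumr -big_split; apply: eq_bigr => j _ /=.
by rewrite !mxE scalerA -scalerDl; congr (_ *: _); ring.
Qed.

Lemma lin_Sant : lin S.
Proof.
move=> c x y; rewrite /Sant scaler_sumr -big_split; apply: eq_bigr => i _ /=.
by rewrite !mxE scalerA -scalerDl.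
Qed.

Lemma lin_Delta : lin D.
Proof.
move=> c x y; rewrite /Delta scaler_sumr -big_split; apply: eq_bigr => i _ /=.
by rewrite !mxE scalerA -scalerDl.
Qed.

Lemma epsL c x y : ep (c *: x + y) = c * ep x + ep y.
Proof.
rewrite /eps mulr_sumr -big_split; apply: eq_bigr => i _ /=.
by rewrite !mxE; ring.
Qed.

Lemma ebasE i j : (e i) 0 j = if i == j then 1 else 0.
Proof. by rewrite /ebas mxE eqxx /= eq_sym; case: (i == j). Qed.

Lemma sum_ebas (V : lmodType K) i (F : 'I_n -> V) :
  \sum_(j < n) (e i) 0 j *: F j = F i.
Proof.
rewrite (bigD1 i) //= big1 ?addr0 => [|j nj]; first by rewrite ebasE eqxx scale1r.
by rewrite ebasE eq_sym (negbTE nj) scale0r.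
Qed.

Lemma sum_ebasK i (F : 'I_n -> K) :
  \sum_(j < n) (e i) 0 j * F j = F i.
Proof.
rewrite (bigD1 i) //= big1 ?addr0 => [|j nj]; first by rewrite ebasE eqxx mul1r.
by rewrite ebasE eq_sym (negbTE nj) mul0r.
Qed.

Lemma mulA_e i j : m (e i) (e j) = hmul H i j.
Proof.
rewrite /Defs.mulA; under eq_bigr => k _ do under eq_bigr => l _ do rewrite -scalerA.
rewrite (eq_bigr (fun k => (e i) 0 k *: \sum_(l < n) (e j) 0 l *: hmul H k l)).
  by rewrite sum_ebas sum_ebas.
by move=> k _; rewrite scaler_sumr.
Qed.

Lemma Sant_e i : S (e i) = hanti H i.
Proof. by rewrite /Sant sum_ebas. Qed.
Lemma Delta_e i : D (e i) = hcop H i.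
Proof. by rewrite /Delta sum_ebas. Qed.
Lemma eps_e i : ep (e i) = hcounit H i.
Proof. by rewrite /eps sum_ebasK. Qed.


Lemma lin_mAl (U : lmodType K) (F : U -> A) z : lin F -> lin (fun x => m (F x) z).
Proof. move=> h; exact: (lin_comp h (lin_mull z)). Qed.
Lemma lin_mAr (U : lmodType K) (F : U -> A) z : lin F -> lin (fun x => m z (F x)).
Proof. move=> h; exact: (lin_comp h (lin_mulr z)). Qed.
Lemma lin_SA (U : lmodType K) (F : U -> A) : lin F -> lin (fun x => S (F x)).
Proof. move=> h; exact: (lin_comp h lin_Sant). Qed.
Lemma lin_DA (U : lmodType K) (F : U -> A) : lin F -> lin (fun x => D (F x)).
Proof. move=> h; exact: (lin_comp h lin_Delta). Qed.
Lemma lin_epsZ (U V : lmodType K) (F : U -> A) (z : V) : lin F -> lin (fun x => ep (F x) *: z).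
Proof. by move=> h c x y; rewrite h epsL scalerDl scalerA. Qed.

Lemma tensE (x y : A) i j : tens x y i j = x 0 i * y 0 j.
Proof. by rewrite /tens !mxE big_ord1 !mxE. Qed.

Lemma lin_tensl z : lin (fun x : A => tens x z).
Proof. by move=> c x y; apply/matrixP => i j; rewrite !(tensE, mxE); ring. Qed.
Lemma lin_tensr z : lin (fun x : A => tens z x).
Proof. by move=> c x y; apply/matrixP => i j; rewrite !(tensE, mxE); ring. Qed.
Lemma lin_tl (U : lmodType K) (F : U -> A) z : lin F -> lin (fun x => tens (F x) z).
Proof. move=> h; exact: (lin_comp h (lin_tensl z)). Qed.
Lemma lin_tr (U : lmodType K) (F : U -> A) z : lin F -> lin (fun x => tens z (F x)).
Proof. move=> h; exact: (lin_comp h (lin_tensr z)). Qed.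

Definition ev2 (V : lmodType K) (T : 'M[K]_n) (f : A -> A -> V) : V :=
  \sum_(i < n) \sum_(j < n) T i j *: f (e i) (e j).

Definition bilin (V : lmodType K) (f : A -> A -> V) :=
  (forall y, lin (fun x => f x y)) /\ (forall x, lin (fun y => f x y)).

Lemma ev2_eq (V : lmodType K) T (f g : A -> A -> V) :
  (forall x y, f x y = g x y) -> ev2 T f = ev2 T g.
Proof. by move=> h; apply: eq_bigr => i _; apply: eq_bigr => j _; rewrite h. Qed.

Lemma lin_ev2T (V : lmodType K) (f : A -> A -> V) : lin (fun T => ev2 T f).
Proof.
move=> c T U; rewrite /ev2 scaler_sumr -big_split; apply: eq_bigr => i _ /=.
rewrite scaler_sumr -big_split; apply: eq_bigr => j _ /=.
by rewrite !mxE scalerDl scalerA.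
Qed.

Lemma ev2_sumT (V : lmodType K) (f : A -> A -> V) (I : Type) (r : seq I) (P : pred I) F :
  ev2 (\sum_(i <- r | P i) F i) f = \sum_(i <- r | P i) ev2 (F i) f.
Proof. exact: (lin_sum (lin_ev2T f)). Qed.
Lemma ev2_scaleT (V : lmodType K) (f : A -> A -> V) c T : ev2 (c *: T) f = c *: ev2 T f.
Proof. exact: (linZ (lin_ev2T f)). Qed.
Lemma ev2_addT (V : lmodType K) (f : A -> A -> V) T U : ev2 (T + U) f = ev2 T f + ev2 U f.
Proof. exact: (linD (lin_ev2T f)). Qed.

Lemma ev2_map (V W : lmodType K) (F : V -> W) T (f : A -> A -> V) :
  lin F -> F (ev2 T f) = ev2 T (fun x y => F (f x y)).
Proof.
move=> hF; rewrite /ev2 (lin_sum hF); apply: eq_bigr => i _.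
by rewrite (lin_sum hF); apply: eq_bigr => j _; rewrite (linZ hF).
Qed.

Lemma ev2_Zf (V : lmodType K) T (f : A -> A -> V) c :
  ev2 T (fun x y => c *: f x y) = c *: ev2 T f.
Proof. by rewrite (ev2_map _ _ (lin_Z c (@lin_id _ V))). Qed.

Lemma ev2_Df (V : lmodType K) T (f g : A -> A -> V) :
  ev2 T (fun x y => f x y + g x y) = ev2 T f + ev2 T g.
Proof.
rewrite /ev2 -big_split; apply: eq_bigr => i _ /=.
by rewrite -big_split; apply: eq_bigr => j _ /=; rewrite scalerDr.
Qed.

Lemma exch4 (V : lmodType K) (F : 'I_n -> 'I_n -> 'I_n -> 'I_n -> V) :
  \sum_(a < n) \sum_(b < n) \sum_(c < n) \sum_(d < n) F a b c d =
  \sum_(c < n) \sum_(d < n) \sum_(a < n) \sum_(b < n) F a b c d.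
Proof.
under eq_bigr => a _ do rewrite exchange_big.
rewrite exchange_big; apply: eq_bigr => c _.
under eq_bigr => a _ do rewrite exchange_big.
by rewrite exchange_big.
Qed.

Lemma ev2_swap (V : lmodType K) T U (f : A -> A -> A -> A -> V) :
  ev2 T (fun x y => ev2 U (fun p q => f x y p q)) =
  ev2 U (fun p q => ev2 T (fun x y => f x y p q)).
Proof.
rewrite /ev2.
transitivity (\sum_(i < n) \sum_(j < n) \sum_(k < n) \sum_(l < n)
   (T i j * U k l) *: f (e i) (e j) (e k) (e l)).
  apply: eq_bigr => i _; apply: eq_bigr => j _; rewrite scaler_sumr.
  apply: eq_bigr => k _; rewrite scaler_sumr; apply: eq_bigr => l _.
  by rewrite scalerA.
rewrite exch4; apply: eq_bigr => k _; apply: eq_bigr => l _; rewrite scaler_sumr.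
apply: eq_bigr => i _; rewrite scaler_sumr; apply: eq_bigr => j _.
by rewrite scalerA mulrC.
Qed.

Lemma ev2_tens (V : lmodType K) (f : A -> A -> V) x y :
  bilin f -> ev2 (tens x y) f = f x y.
Proof.
case=> h1 h2; rewrite /ev2 (lin_expand (h1 y) x); apply: eq_bigr => i _.
rewrite (lin_expand (h2 (delta_mx 0 i)) y) scaler_sumr; apply: eq_bigr => j _.
by rewrite tensE scalerA.
Qed.

Lemma tens_e i j : tens (e i) (e j) = delta_mx i j.
Proof.
apply/matrixP => a b; rewrite tensE !ebasE mxE (eq_sym a) (eq_sym b).
by case: (i == a); case: (j == b); rewrite /= ?mulr1 ?mulr0 ?mul0r ?mulr1n ?mulr0n.
Qed.

Lemma ev2_id T : ev2 T (@tens K n) = T.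
Proof.
rewrite {2}(matrix_sum_delta T); apply: eq_bigr => i _; apply: eq_bigr => j _.
by rewrite tens_e.
Qed.

Lemma ev2_tr (V : lmodType K) T (f : A -> A -> V) : ev2 T^T f = ev2 T (fun x y => f y x).
Proof.
rewrite /ev2 exchange_big /=; apply: eq_bigr => i _; apply: eq_bigr => j _.
by rewrite mxE.
Qed.

Lemma ev2_mul2 (V : lmodType K) T U (f : A -> A -> V) : bilin f ->
  ev2 (mul2 H T U) f = ev2 T (fun x y => ev2 U (fun x' y' => f (m x x') (m y y'))).
Proof.
move=> hf; rewrite /mul2 ev2_sumT [in RHS]/ev2; apply: eq_bigr => i _.
rewrite ev2_sumT; apply: eq_bigr => j _; rewrite ev2_sumT scaler_sumr; apply: eq_bigr => k _.
rewrite ev2_sumT scaler_sumr; apply: eq_bigr => l _.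
by rewrite ev2_scaleT ev2_tens // scalerA !mulA_e.
Qed.

Lemma lin_ev2b (U V : lmodType K) T (g : U -> A -> A -> V) :
  (forall p q, lin (fun x => g x p q)) -> lin (fun x => ev2 T (g x)).
Proof.
move=> h c x y; rewrite /ev2 scaler_sumr -big_split; apply: eq_bigr => i _ /=.
by rewrite scaler_sumr -big_split; apply: eq_bigr => j _ /=; rewrite h scalerDr !scalerA mulrC.
Qed.

Lemma lin_ev2t (U V : lmodType K) (F : U -> 'M[K]_n) (f : A -> A -> V) :
  lin F -> lin (fun x => ev2 (F x) f).
Proof. move=> h; exact: (lin_comp h (lin_ev2T f)). Qed.

Lemma lin_bil1 (U V : lmodType K) (f : A -> A -> V) (F : U -> A) z :
  bilin f -> lin F -> lin (fun x => f (F x) z).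
Proof. by case=> h1 _ hF; exact: (lin_comp hF (h1 z)). Qed.
Lemma lin_bil2 (U V : lmodType K) (f : A -> A -> V) (F : U -> A) z :
  bilin f -> lin F -> lin (fun x => f z (F x)).
Proof. by case=> _ h2 hF; exact: (lin_comp hF (h2 z)). Qed.





Lemma tens_bil : bilin (@tens K n).
Proof. split=> ?; [exact: lin_tensl | exact: lin_tensr]. Qed.

Lemma ev2_one2 (V : lmodType K) (f : A -> A -> V) : bilin f -> ev2 (one2 H) f = f one one.
Proof. by move=> hf; rewrite /one2 ev2_tens. Qed.

Lemma mx_ev2 T U : (forall f : A -> A -> 'M[K]_n, bilin f -> ev2 T f = ev2 U f) -> T = U.
Proof. by move=> h; rewrite -(ev2_id T) -(ev2_id U); apply: h; exact: tens_bil. Qed.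

Local Notation A3 := {ffun 'I_n -> 'M[K]_n}.

Definition ev3 (V : lmodType K) (X : A3) (g : A -> A -> A -> V) : V :=
  \sum_(i < n) \sum_(j < n) \sum_(k < n) X i j k *: g (e i) (e j) (e k).

Definition trilin (V : lmodType K) (g : A -> A -> A -> V) :=
  [/\ (forall y z, lin (fun x => g x y z)), (forall x z, lin (fun y => g x y z))
    & (forall x y, lin (fun z => g x y z))].

Lemma tens3E (x y z : A) i j k : tens3 x y z i j k = x 0 i * (y 0 j * z 0 k).
Proof. by rewrite /tens3 ffunE mxE tensE. Qed.

Lemma lin_ev3X (V : lmodType K) (g : A -> A -> A -> V) : lin (fun X => ev3 X g).
Proof.
move=> c X Y; rewrite /ev3 scaler_sumr -big_split; apply: eq_bigr => i _ /=.
rewrite scaler_sumr -big_split; apply: eq_bigr => j _ /=.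
rewrite scaler_sumr -big_split; apply: eq_bigr => k _ /=.
by rewrite !ffunE !mxE scalerDl scalerA.
Qed.

Lemma ev3_sum (V : lmodType K) (g : A -> A -> A -> V) (I : Type) (r : seq I) (P : pred I) F :
  ev3 (\sum_(i <- r | P i) F i) g = \sum_(i <- r | P i) ev3 (F i) g.
Proof. exact: (lin_sum (lin_ev3X g)). Qed.
Lemma ev3_scale (V : lmodType K) (g : A -> A -> A -> V) c X : ev3 (c *: X) g = c *: ev3 X g.
Proof. exact: (linZ (lin_ev3X g)). Qed.

Lemma ev3_tens3 (V : lmodType K) (g : A -> A -> A -> V) x y z :
  trilin g -> ev3 (tens3 x y z) g = g x y z.
Proof.
case=> h1 h2 h3; rewrite /ev3 (lin_expand (h1 y z) x); apply: eq_bigr => i _.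
rewrite (lin_expand (h2 (delta_mx 0 i) z) y) scaler_sumr; apply: eq_bigr => j _.
rewrite (lin_expand (h3 (delta_mx 0 i) (delta_mx 0 j)) z) !scaler_sumr; apply: eq_bigr => k _.
by rewrite tens3E !scalerA mulrA.
Qed.

Lemma ev3_mul3 (V : lmodType K) (g : A -> A -> A -> V) X Y : trilin g ->
  ev3 (mul3 H X Y) g =
  ev3 X (fun a b c => ev3 Y (fun a' b' c' => g (m a a') (m b b') (m c c'))).
Proof.
move=> hg; rewrite /mul3 ev3_sum [in RHS]/ev3; apply: eq_bigr => i _.
rewrite ev3_sum; apply: eq_bigr => j _.
rewrite ev3_sum; apply: eq_bigr => k _.
rewrite ev3_sum scaler_sumr; apply: eq_bigr => i' _.
rewrite ev3_sum scaler_sumr; apply: eq_bigr => j' _.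
rewrite ev3_sum scaler_sumr; apply: eq_bigr => k' _.
by rewrite ev3_scale ev3_tens3 // scalerA !mulA_e.
Qed.

Lemma ev3_leg13 (V : lmodType K) (g : A -> A -> A -> V) T : trilin g ->
  ev3 (leg13 H T) g = ev2 T (fun x y => g x one y).
Proof.
move=> hg; rewrite /leg13 ev3_sum; apply: eq_bigr => i _.
by rewrite ev3_sum; apply: eq_bigr => j _; rewrite ev3_scale ev3_tens3.
Qed.
Lemma ev3_leg12 (V : lmodType K) (g : A -> A -> A -> V) T : trilin g ->
  ev3 (leg12 H T) g = ev2 T (fun x y => g x y one).
Proof.
move=> hg; rewrite /leg12 ev3_sum; apply: eq_bigr => i _.
by rewrite ev3_sum; apply: eq_bigr => j _; rewrite ev3_scale ev3_tens3.
Qed.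
Lemma ev3_leg23 (V : lmodType K) (g : A -> A -> A -> V) T : trilin g ->
  ev3 (leg23 H T) g = ev2 T (fun x y => g one x y).
Proof.
move=> hg; rewrite /leg23 ev3_sum; apply: eq_bigr => i _.
by rewrite ev3_sum; apply: eq_bigr => j _; rewrite ev3_scale ev3_tens3.
Qed.

Lemma ev3_t2x (V : lmodType K) (g : A -> A -> A -> V) M z : trilin g ->
  ev3 (t2x M z) g = ev2 M (fun p q => g p q z).
Proof.
case=> _ _ h3; rewrite /ev3 /ev2; apply: eq_bigr => a _; apply: eq_bigr => b _.
rewrite (lin_expand (h3 (e a) (e b)) z) scaler_sumr; apply: eq_bigr => c _.
by rewrite /t2x ffunE !mxE big_ord1 !mxE scalerA.
Qed.

Lemma ev3_xt2 (V : lmodType K) (g : A -> A -> A -> V) x M : trilin g ->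
  ev3 (xt2 x M) g = ev2 M (fun p q => g x p q).
Proof.
case=> h1 _ _; rewrite /ev3 /ev2.
transitivity (\sum_(b < n) \sum_(c < n) \sum_(a < n) (x 0 a * M b c) *: g (e a) (e b) (e c)).
  rewrite exchange_big /=; apply: eq_bigr => b _.
  rewrite exchange_big /=; apply: eq_bigr => c _.
  by apply: eq_bigr => a _; rewrite /xt2 ffunE mxE.
apply: eq_bigr => b _; apply: eq_bigr => c _.
rewrite (lin_expand (h1 (e b) (e c)) x) scaler_sumr; apply: eq_bigr => a _.
by rewrite scalerA mulrC.
Qed.

Lemma ev3_Delta_id (V : lmodType K) (g : A -> A -> A -> V) T : trilin g ->
  ev3 (Delta_id H T) g = ev2 T (fun x y => ev2 (D x) (fun p q => g p q y)).
Proof.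
move=> hg; rewrite /Delta_id ev3_sum; apply: eq_bigr => i _.
by rewrite ev3_sum; apply: eq_bigr => j _; rewrite ev3_scale ev3_t2x.
Qed.

Lemma ev3_id_Delta (V : lmodType K) (g : A -> A -> A -> V) T : trilin g ->
  ev3 (id_Delta H T) g = ev2 T (fun x y => ev2 (D y) (fun p q => g x p q)).
Proof.
move=> hg; rewrite /id_Delta ev3_sum; apply: eq_bigr => i _.
by rewrite ev3_sum; apply: eq_bigr => j _; rewrite ev3_scale ev3_xt2.
Qed.

Lemma lin_ev3b (U V : lmodType K) X (g : U -> A -> A -> A -> V) :
  (forall p q r, lin (fun x => g x p q r)) -> lin (fun x => ev3 X (g x)).
Proof.
move=> h c x y; rewrite /ev3 scaler_sumr -big_split; apply: eq_bigr => i _ /=.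
rewrite scaler_sumr -big_split; apply: eq_bigr => j _ /=.
by rewrite scaler_sumr -big_split; apply: eq_bigr => k _ /=; rewrite h scalerDr !scalerA mulrC.
Qed.

Lemma lin_tri1 (U V : lmodType K) (g : A -> A -> A -> V) (F : U -> A) y z :
  trilin g -> lin F -> lin (fun x => g (F x) y z).
Proof. by case=> h1 _ _ hF; exact: (lin_comp hF (h1 y z)). Qed.
Lemma lin_tri2 (U V : lmodType K) (g : A -> A -> A -> V) (F : U -> A) x z :
  trilin g -> lin F -> lin (fun y => g x (F y) z).
Proof. by case=> _ h2 _ hF; exact: (lin_comp hF (h2 x z)). Qed.
Lemma lin_tri3 (U V : lmodType K) (g : A -> A -> A -> V) (F : U -> A) x y :
  trilin g -> lin F -> lin (fun z => g x y (F z)).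
Proof. by case=> _ _ h3 hF; exact: (lin_comp hF (h3 x y)). Qed.

Ltac lin1 := first
 [ apply: lin_id
 | apply: lin_mAl | apply: lin_mAr | apply: lin_SA | apply: lin_DA
 | apply: lin_tl | apply: lin_tr | apply: lin_epsZ | apply: lin_Z
 | apply: lin_D
 | apply: lin_ev2t
 | (apply: lin_ev2b; intros ??; cbv beta)
 | (eapply lin_bil1; [eassumption|])
 | (eapply lin_bil2; [eassumption|])
 | (apply: lin_ev3b; intros ???; cbv beta)
 | (eapply lin_tri1; [eassumption|])
 | (eapply lin_tri2; [eassumption|])
 | (eapply lin_tri3; [eassumption|]) ].

Ltac linsolve := repeat (match goal with
 | |- bilin _ => split; intro; cbv beta
 | |- trilin _ => split; intros ??; cbv beta
 | |- forall _, _ => intro; cbv beta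
 | |- lin _ => lin1
 end).

Lemma test_bil a : bilin (fun x y => m (m (S x) a) (S (m y a))).
Proof. linsolve. Qed.


Lemma test_tri (V : lmodType K) (g : A -> A -> A -> V) X : trilin g ->
  trilin (fun a b c => ev3 X (fun a' b' c' => g (m a a') (m b b') (m c c'))).
Proof. move=> hg; linsolve. Qed.


Hypothesis mA : forall a b c, m (m a b) c = m a (m b c).
Hypothesis m1l : forall a, m one a = a.
Hypothesis m1r : forall a, m a one = a.
Hypothesis coas : forall a, Delta_id H (D a) = id_Delta H (D a).
Hypothesis cu1 : forall a, \sum_(i < n) \sum_(j < n) (D a i j * ep (e i)) *: e j = a.
Hypothesis cu2 : forall a, \sum_(i < n) \sum_(j < n) (D a i j * ep (e j)) *: e i = a.
Hypothesis Dm : forall a b, D (m a b) = mul2 H (D a) (D b).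
Hypothesis D1 : D one = one2 H.
Hypothesis em : forall a b, ep (m a b) = ep a * ep b.
Hypothesis e1 : ep one = 1.
Hypothesis an1 : forall a, \sum_(i < n) \sum_(j < n) D a i j *: m (S (e i)) (e j) = ep a *: one.
Hypothesis an2 : forall a, \sum_(i < n) \sum_(j < n) D a i j *: m (e i) (S (e j)) = ep a *: one.
Hypothesis Sbij : bijective S.

Lemma cuL a : ev2 (D a) (fun x y => ep x *: y) = a.
Proof.
rewrite -{2}(cu1 a); apply: eq_bigr => i _; apply: eq_bigr => j _.
by rewrite scalerA.
Qed.
Lemma cuR a : ev2 (D a) (fun x y => ep y *: x) = a.
Proof.
rewrite -{2}(cu2 a); apply: eq_bigr => i _; apply: eq_bigr => j _.
by rewrite scalerA.
Qed.

Lemma colL (V : lmodType K) a (G : A -> V) : lin G -> ev2 (D a) (fun x y => ep x *: G y) = G a.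
Proof.
move=> hG; rewrite -{2}(cuL a) (ev2_map _ _ hG); apply: ev2_eq => x y.
by rewrite (linZ hG).
Qed.
Lemma colR (V : lmodType K) a (G : A -> V) : lin G -> ev2 (D a) (fun x y => ep y *: G x) = G a.
Proof.
move=> hG; rewrite -{2}(cuR a) (ev2_map _ _ hG); apply: ev2_eq => x y.
by rewrite (linZ hG).
Qed.
Lemma an1' a : ev2 (D a) (fun x y => m (S x) y) = ep a *: one.
Proof. exact: an1. Qed.
Lemma an2' a : ev2 (D a) (fun x y => m x (S y)) = ep a *: one.
Proof. exact: an2. Qed.

Lemma antL (V : lmodType K) a (G : A -> V) : lin G ->
  ev2 (D a) (fun x y => G (m (S x) y)) = ep a *: G one.
Proof. by move=> hG; rewrite -(ev2_map _ _ hG) an1' (linZ hG). Qed.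
Lemma antR (V : lmodType K) a (G : A -> V) : lin G ->
  ev2 (D a) (fun x y => G (m x (S y))) = ep a *: G one.
Proof. by move=> hG; rewrite -(ev2_map _ _ hG) an2' (linZ hG). Qed.

Lemma CA (V : lmodType K) a (g : A -> A -> A -> V) : trilin g ->
  ev2 (D a) (fun x y => ev2 (D x) (fun p q => g p q y)) =
  ev2 (D a) (fun x y => ev2 (D y) (fun p q => g x p q)).
Proof. by move=> hg; rewrite -ev3_Delta_id // coas ev3_id_Delta. Qed.

Lemma S1 : S one = one.
Proof.
have := an1' one; rewrite D1 ev2_one2; last by linsolve.
by rewrite m1r e1 scale1r.
Qed.


Lemma SM x y : S (m x y) = m (S y) (S x).
Proof.
pose E := ev2 (D x) (fun x1 x' => ev2 (D x') (fun x2 x3 =>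
           ev2 (D y) (fun y1 y' => ev2 (D y') (fun y2 y3 =>
             m (m (S (m x1 y1)) (m x2 y2)) (m (S y3) (S x3)))))).
have E1 : E = S (m x y).
  rewrite /E.
  transitivity (ev2 (D x) (fun x1 x' => ev2 (D x') (fun x2 x3 => m (S (m x1 y)) (m x2 (S x3))))).
    apply: ev2_eq => x1 x'; apply: ev2_eq => x2 x3.
    transitivity (ev2 (D y) (fun y1 y' => ep y' *: (fun z => m (S (m x1 z)) (m x2 (S x3))) y1)).
      apply: ev2_eq => y1 y'.
      transitivity (ev2 (D y') (fun y2 y3 => (fun z => m (S (m x1 y1)) (m x2 (m z (S x3)))) (m y2 (S y3)))).
        by apply: ev2_eq => y2 y3; rewrite !mA.
      by rewrite (antR _ (G := fun z => m (S (m x1 y1)) (m x2 (m z (S x3))))) ?m1l //; linsolve.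
    by rewrite (colR _ (G := fun z => m (S (m x1 z)) (m x2 (S x3)))) //; linsolve.
  transitivity (ev2 (D x) (fun x1 x' => ep x' *: (fun z => S (m z y)) x1)).
    apply: ev2_eq => x1 x'.
    transitivity (ev2 (D x') (fun x2 x3 => (fun z => m (S (m x1 y)) z) (m x2 (S x3)))) => //.
    by rewrite (antR _ (G := fun z => m (S (m x1 y)) z)) ?m1r //; linsolve.
  by rewrite (colR _ (G := fun z => S (m z y))) //; linsolve.
have E2 : E = m (S y) (S x).
  rewrite /E.
  rewrite -(CA x (g := fun x1 x2 x3 => ev2 (D y) (fun y1 y' => ev2 (D y') (fun y2 y3 =>
             m (m (S (m x1 y1)) (m x2 y2)) (m (S y3) (S x3)))))); last by linsolve.
  transitivity (ev2 (D x) (fun x12 x3 => ev2 (D y) (fun y12 y3 => (ep x12 * ep y12) *: m (S y3) (S x3)))).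
    apply: ev2_eq => x12 x3.
    transitivity (ev2 (D x12) (fun x1 x2 => ev2 (D y) (fun y12 y3 => ev2 (D y12) (fun y1 y2 =>
             m (m (S (m x1 y1)) (m x2 y2)) (m (S y3) (S x3)))))).
      apply: ev2_eq => x1 x2.
      by rewrite -(CA y (g := fun y1 y2 y3 => m (m (S (m x1 y1)) (m x2 y2)) (m (S y3) (S x3)))) //; linsolve.
    rewrite ev2_swap; apply: ev2_eq => y12 y3.
    rewrite -(ev2_mul2 _ _ (f := fun p q => m (m (S p) q) (m (S y3) (S x3)))); last by linsolve.
    rewrite -Dm.
    rewrite (antL _ (G := fun z => m z (m (S y3) (S x3)))); last by linsolve.
    by rewrite em m1l.
  transitivity (ev2 (D x) (fun x12 x3 => ep x12 *: (fun z => m (S y) (S z)) x3)).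
    apply: ev2_eq => x12 x3.
    transitivity (ev2 (D y) (fun y12 y3 => ep y12 *: (fun z => ep x12 *: m (S z) (S x3)) y3)).
      by apply: ev2_eq => y12 y3; cbv beta; rewrite scalerA mulrC.
    by rewrite (colL _ (G := fun z => ep x12 *: m (S z) (S x3))) //; linsolve.
  by rewrite (colL _ (G := fun z => m (S y) (S z))) //; linsolve.
by rewrite -E1 E2.
Qed.


Lemma mul2A T U W : mul2 H (mul2 H T U) W = mul2 H T (mul2 H U W).
Proof.
apply: mx_ev2 => f hf.
rewrite ev2_mul2; last by linsolve.
rewrite ev2_mul2; last by linsolve.
rewrite ev2_mul2 //.
apply: ev2_eq => x y; rewrite ev2_mul2; last by linsolve.
by apply: ev2_eq => p q; apply: ev2_eq => r s; rewrite !mA.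
Qed.

Lemma mul12 T : mul2 H (one2 H) T = T.
Proof.
apply: mx_ev2 => f hf.
rewrite ev2_mul2 // ev2_one2; last by linsolve.
by apply: ev2_eq => x y; rewrite !m1l.
Qed.

Lemma mul2r1 T : mul2 H T (one2 H) = T.
Proof.
apply: mx_ev2 => f hf.
rewrite ev2_mul2 //; apply: ev2_eq => x y; rewrite ev2_one2; last by linsolve.
by rewrite !m1r.
Qed.

Variables R Rinv : 'M[K]_n.
Hypothesis RRi : mul2 H R Rinv = one2 H.
Hypothesis RiR : mul2 H Rinv R = one2 H.
Hypothesis QT : forall a, (D a)^T = mul2 H (mul2 H R (D a)) Rinv.
Hypothesis DR1 : Delta_id H R = mul3 H (leg13 H R) (leg23 H R).
Hypothesis DR2 : id_Delta H R = mul3 H (leg13 H R) (leg12 H R).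

Lemma QT' a : mul2 H R (D a) = mul2 H (D a)^T R.
Proof. by rewrite QT mul2A RiR mul2r1. Qed.

Lemma DR1ev (V : lmodType K) (g : A -> A -> A -> V) : trilin g ->
  ev2 R (fun x y => ev2 (D x) (fun p q => g p q y)) =
  ev2 R (fun x y => ev2 R (fun x' y' => g x x' (m y y'))).
Proof.
move=> hg; rewrite -ev3_Delta_id // DR1 ev3_mul3 // ev3_leg13; last by linsolve.
apply: ev2_eq => x y; rewrite ev3_leg23; last by linsolve.
by apply: ev2_eq => x' y'; rewrite m1r m1l.
Qed.

Lemma DR2ev (V : lmodType K) (g : A -> A -> A -> V) : trilin g ->
  ev2 R (fun x y => ev2 (D y) (fun p q => g x p q)) =
  ev2 R (fun x y => ev2 R (fun x' y' => g (m x x') y' y)).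
Proof.
move=> hg; rewrite -ev3_id_Delta // DR2 ev3_mul3 // ev3_leg13; last by linsolve.
apply: ev2_eq => x y; rewrite ev3_leg12; last by linsolve.
by apply: ev2_eq => x' y'; rewrite m1r m1l.
Qed.

Lemma epsR1 : ev2 R (fun x y => ep x *: y) = one.
Proof.
set c := ev2 R (fun x y => ep x *: y).
have h := DR1ev (g := fun p q r => ep p *: tens q r).
have hL : ev2 R (fun x y => ev2 (D x) (fun p q => ep p *: tens q y)) = R.
  rewrite -{2}(ev2_id R); apply: ev2_eq => x y.
  by rewrite (colL _ (G := fun z => tens z y)) //; linsolve.
have hR : ev2 R (fun x y => ev2 R (fun x' y' => ep x *: tens x' (m y y'))) =
          mul2 H (tens one c) R.
  rewrite -(ev2_id (mul2 H _ _)) ev2_mul2; last exact: tens_bil.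
  rewrite ev2_tens; last by linsolve.
  rewrite ev2_swap; apply: ev2_eq => x' y'.
  rewrite m1l /c (ev2_map _ _ (lin_tr x' (lin_mAl y' (@lin_id _ _)))).
  by apply: ev2_eq => x y; rewrite /= (linZ (lin_mull _)) (linZ (lin_tensr _)).
have e2 : R = mul2 H (tens one c) R by rewrite -hR -h ?hL //; linsolve.
have e3 : one2 H = tens one c by rewrite -RRi {1}e2 mul2A RRi mul2r1.
have := congr1 (fun T => ev2 T (fun x y => ep x *: y)) e3; rewrite /=.
by rewrite ev2_one2 ?ev2_tens ?e1 ?scale1r //; linsolve.
Qed.


Lemma epsR2 : ev2 R (fun x y => ep y *: x) = one.
Proof.
set c := ev2 R (fun x y => ep y *: x).
have h := DR2ev (g := fun p q r => ep r *: tens p q).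
have hL : ev2 R (fun x y => ev2 (D y) (fun p q => ep q *: tens x p)) = R.
  rewrite -{2}(ev2_id R); apply: ev2_eq => x y.
  by rewrite (colR _ (G := fun z => tens x z)) //; linsolve.
have hR : ev2 R (fun x y => ev2 R (fun x' y' => ep y *: tens (m x x') y')) =
          mul2 H (tens c one) R.
  rewrite -(ev2_id (mul2 H _ _)) ev2_mul2; last exact: tens_bil.
  rewrite ev2_tens; last by linsolve.
  rewrite ev2_swap; apply: ev2_eq => x' y'.
  rewrite m1l /c (ev2_map _ _ (lin_tl y' (lin_mAl x' (@lin_id _ _)))).
  by apply: ev2_eq => x y; rewrite /= (linZ (lin_mull _)) (linZ (lin_tensl _)).
have e2 : R = mul2 H (tens c one) R by rewrite -hR -h ?hL //; linsolve.
have e3 : one2 H = tens c one by rewrite -RRi {1}e2 mul2A RRi mul2r1.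
have := congr1 (fun T => ev2 T (fun x y => ep y *: x)) e3; rewrite /=.
by rewrite ev2_one2 ?ev2_tens ?e1 ?scale1r //; linsolve.
Qed.

Lemma ev2_ev2 (V : lmodType K) T (F G : A -> A) (g : A -> A -> V) : bilin g ->
  ev2 (ev2 T (fun x y => tens (F x) (G y))) g = ev2 T (fun x y => g (F x) (G y)).
Proof.
move=> hg; rewrite (ev2_map _ _ (lin_ev2T g)); apply: ev2_eq => x y.
by rewrite ev2_tens.
Qed.

Variable Si : A -> A.
Hypothesis SSi : forall x, S (Si x) = x.
Hypothesis SiS : forall x, Si (S x) = x.

Lemma S_inj : injective S.
Proof. exact: (can_inj SiS). Qed.

Lemma lin_Si : lin Si.
Proof.
move=> c x y; apply: S_inj.
by rewrite lin_Sant !SSi.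
Qed.
Lemma lin_SiA (U : lmodType K) (F : U -> A) : lin F -> lin (fun x => Si (F x)).
Proof. move=> h; exact: (lin_comp h lin_Si). Qed.

Ltac lin2 := first [ lin1 | apply: lin_SiA ].
Ltac linsolve2 := repeat (match goal with
 | |- bilin _ => split; intro; cbv beta
 | |- trilin _ => split; intros ??; cbv beta
 | |- forall _, _ => intro; cbv beta
 | |- lin _ => lin2
 end).

Lemma antSi (V : lmodType K) a (G : A -> V) : lin G ->
  ev2 (D a) (fun p q => G (m q (Si p))) = ep a *: G one.
Proof.
move=> hG; rewrite -(ev2_map _ _ hG) -(linZ hG); congr (G _).
apply: S_inj; rewrite (ev2_map _ _ lin_Sant) (linZ lin_Sant) S1 -an2'.
by apply: ev2_eq => p q; rewrite SM SSi.
Qed.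

Definition Ym := ev2 R (fun x y => tens x (Si y)).
Definition Xm := ev2 R (fun x y => tens (S x) y).

Lemma RY : mul2 H R Ym = one2 H.
Proof.
apply: mx_ev2 => f hf.
rewrite ev2_mul2 // ev2_one2 //.
transitivity (ev2 R (fun x y => ev2 R (fun x' y' => f (m x x') (m y (Si y'))))).
  apply: ev2_eq => x y; rewrite /Ym ev2_ev2 //; linsolve2.
rewrite -(DR2ev (g := fun a b c => f a (m c (Si b)))); last by linsolve2.
transitivity (ev2 R (fun x y => ep y *: f x one)).
  apply: ev2_eq => x y.
  by rewrite (antSi _ (G := fun z => f x z)) //; linsolve2.
rewrite -{2}epsR2 (ev2_map _ _ (hf.1 one)).
by apply: ev2_eq => x y; rewrite (linZ (hf.1 one)).
Qed.

Lemma XR : mul2 H Xm R = one2 H.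
Proof.
apply: mx_ev2 => f hf.
rewrite ev2_mul2 // ev2_one2 //.
rewrite /Xm ev2_ev2; last by linsolve2.
rewrite -(DR1ev (g := fun a b c => f (m (S a) b) c)); last by linsolve2.
transitivity (ev2 R (fun x y => ep x *: f one y)).
  apply: ev2_eq => x y.
  by rewrite (antL _ (G := fun z => f z y)) //; linsolve2.
rewrite -{3}epsR1 (ev2_map _ _ (hf.2 one)).
by apply: ev2_eq => x y; rewrite (linZ (hf.2 one)).
Qed.

Lemma Ym_inv : Ym = Rinv.
Proof. by rewrite -[Ym]mul12 -RiR mul2A RY mul2r1. Qed.
Lemma Xm_inv : Xm = Rinv.
Proof. by rewrite -[Xm]mul2r1 -RRi -mul2A XR mul12. Qed.

Lemma SxR (V : lmodType K) (f : A -> A -> V) : bilin f ->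
  ev2 R (fun x y => f (S x) y) = ev2 R (fun x y => f x (Si y)).
Proof.
move=> hf; rewrite -ev2_ev2 // -/Xm Xm_inv -Ym_inv /Ym ev2_ev2 //.
Qed.

Lemma SSR (V : lmodType K) (f : A -> A -> V) : bilin f ->
  ev2 R (fun x y => f (S x) (S y)) = ev2 R f.
Proof.
move=> hf; rewrite (SxR (f := fun x y => f x (S y))); last by linsolve2.
by apply: ev2_eq => x y; rewrite SSi.
Qed.


Local Notation u := (drinfeld_u H R).
Lemma uE : u = ev2 R (fun x y => m (S y) x).
Proof. by []. Qed.

Lemma u1 x : m u x = m (S (S x)) u.
Proof.
have hA : m u x = ev2 (D x) (fun x1 x' => ev2 (D x') (fun x2 x3 => m (m (S (S x3)) (S x2)) (m u x1))).
  symmetry.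
  transitivity (ev2 (D x) (fun x1 x' => ep x' *: m u x1)).
    apply: ev2_eq => x1 x'.
    transitivity (ev2 (D x') (fun x2 x3 => (fun z => m (S z) (m u x1)) (m x2 (S x3)))).
      by apply: ev2_eq => x2 x3; cbv beta; rewrite SM.
    by rewrite (antR _ (G := fun z => m (S z) (m u x1))) ?S1 ?m1l //; linsolve2.
  by rewrite (colR _ (G := fun z => m u z)) //; linsolve2.
rewrite -(CA x (g := fun x1 x2 x3 => m (m (S (S x3)) (S x2)) (m u x1))) in hA; last by linsolve2.
rewrite hA.
transitivity (ev2 (D x) (fun x12 x3 => ep x12 *: (fun z => m (S (S z)) u) x3)).
  apply: ev2_eq => x12 x3.
  transitivity (ev2 (D x12) (fun x1 x2 => ev2 R (fun a b =>
       (fun p q => m (S (S x3)) (m (S q) p)) (m a x1) (m b x2)))).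
    apply: ev2_eq => x1 x2.
    rewrite uE (ev2_map (F := fun z => m (m (S (S x3)) (S x2)) (m z x1))); last by linsolve2.
    by apply: ev2_eq => a b; cbv beta; rewrite SM !mA.
  rewrite ev2_swap -(ev2_mul2 _ _ (f := fun p q => m (S (S x3)) (m (S q) p))); last by linsolve2.
  rewrite QT' ev2_mul2; last by linsolve2.
  rewrite ev2_tr.
  transitivity (ev2 (D x12) (fun x1 x2 => (fun z => ev2 R (fun a b => m (S (S x3)) (m (S b) (m z a)))) (m (S x1) x2))).
    apply: ev2_eq => x1 x2; cbv beta; apply: ev2_eq => a b.
    by rewrite SM !mA.
  rewrite (antL _ (G := fun z => ev2 R (fun a b => m (S (S x3)) (m (S b) (m z a))))); last by linsolve2.
  congr (_ *: _); rewrite uE (ev2_map (F := fun z => m (S (S x3)) z)); last by linsolve2.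
  by apply: ev2_eq => a b; rewrite m1l.
by rewrite (colL _ (G := fun z => m (S (S z)) u)) //; linsolve2.
Qed.

Definition u' := ev2 R (fun x y => m y (S (S x))).

Lemma u'u : m u' u = one.
Proof.
rewrite /u' (ev2_map (F := fun z => m z u)); last by linsolve2.
transitivity (ev2 R (fun x y => ev2 R (fun a b => m (m y (S b)) (m a x)))).
  apply: ev2_eq => x y; cbv beta.
  rewrite mA -u1 uE (ev2_map (F := fun z => m y (m z x))); last by linsolve2.
  by apply: ev2_eq => a b; rewrite !mA.
rewrite ev2_swap.
transitivity (ev2 (mul2 H R Ym) (fun p q => m (S q) p)).
  rewrite ev2_mul2; last by linsolve2.
  apply: ev2_eq => a b; rewrite /Ym ev2_ev2; last by linsolve2.
  by apply: ev2_eq => x y; cbv beta; rewrite SM SSi.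
by rewrite RY ev2_one2 ?S1 ?m1l //; linsolve2.
Qed.


Variable v : A.
Hypothesis vc : forall a, m v a = m a v.
Hypothesis Sv : S v = v.
Hypothesis uv1 : m (m u (S u)) (m v v) = one.
Hypothesis Dv : D v = mul2 H (tens v v) (monodromy H R).

Lemma vvc a : m (m v v) a = m a (m v v).
Proof. by rewrite mA (vc a) -mA vc mA. Qed.
Lemma vvmid a b : m a (m (m v v) b) = m (m v v) (m a b).
Proof. by rewrite -mA -vvc mA. Qed.
Lemma vmid a b : m a (m v b) = m v (m a b).
Proof. by rewrite -mA -vc mA. Qed.

Lemma u'E : u' = m (S u) (m v v).
Proof. by rewrite -[u']m1r -uv1 !mA -(mA u' u) u'u m1l. Qed.
Lemma uu' : m u u' = one.
Proof. by rewrite u'E -mA uv1. Qed.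
Lemma SSu : S (S u) = u.
Proof.
have := congr1 (fun z => m z u') (u1 u); rewrite /= !mA uu' !m1r.
by move/esym.
Qed.
Lemma ucomm : m u (S u) = m (S u) u.
Proof. by rewrite u1 SSu. Qed.

Definition w := ev2 R (fun x y => m (S (S x)) y).

Lemma wS : S u' = w.
Proof.
rewrite /u' /w (ev2_map _ _ lin_Sant).
rewrite -(SSR (f := fun x y => m (S (S x)) y)); last by linsolve2.
by apply: ev2_eq => x y; rewrite SM.
Qed.
Lemma Suw : m (S u) w = one.
Proof. by rewrite -wS -SM u'u S1. Qed.
Lemma wSu : m w (S u) = one.
Proof. by rewrite -wS -SM uu' S1. Qed.

Lemma G1 y : m (S (S y)) w = m w y.
Proof.
have h := u1 (Si y); rewrite SSi in h.
have h2 := congr1 S h; rewrite !SM SSi in h2.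
transitivity (m (m w (S u)) (m (S (S y)) w)); first by rewrite wSu m1l.
by rewrite !mA -(mA (S u)) -h2 !mA Suw m1r.
Qed.

Lemma wE : w = m (m v v) u.
Proof. by rewrite -wS u'E SM SM Sv SSu. Qed.

Lemma G2 : m (S w) w = m v v.
Proof.
rewrite {1}wE SM SM Sv wE -(vvc (S u)) (vvc u) mA -(mA (S u) u) -ucomm uv1 m1r.
by [].
Qed.

Lemma TS b : transm_S H R b = ev2 R (fun x' y' => m (S x') (m (S b) (m w y'))).
Proof.
have -> : transm_S H R b = ev2 R (fun x y => ev2 (D x) (fun p q => m (S (m (m (S p) b) q)) y)) by [].
rewrite (DR1ev (g := fun p q r => m (S (m (m (S p) b) q)) r)); last by linsolve2.
rewrite ev2_swap; apply: ev2_eq => x' y'.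
rewrite /w (ev2_map (F := fun z => m (S x') (m (S b) (m z y')))); last by linsolve2.
by apply: ev2_eq => x y; rewrite !SM !mA.
Qed.

Lemma main a : transm_S H R (transm_S H R a) = right_adj H v a.
Proof.
rewrite TS TS.
transitivity (ev2 R (fun x y => ev2 R (fun x' y' =>
   m (m v v) (m (S x) (m (S y') (m a (m x' y))))))).
  apply: ev2_eq => x y.
  rewrite (ev2_map _ _ lin_Sant).
  rewrite (ev2_map (F := fun z => m (S x) (m z (m w y)))); last by linsolve2.
  apply: ev2_eq => x' y'; cbv beta.
  rewrite !SM !mA.
  rewrite -[m (S (S x')) (m w y)]mA G1 mA.
  rewrite -[m (S (S a)) (m w _)]mA G1 mA.
  rewrite -[m (S w) (m w _)]mA G2.
  by rewrite !vvmid.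
have -> : right_adj H v a = ev2 (D v) (fun p q => m (m (S p) a) q) by [].
rewrite Dv /monodromy ev2_mul2; last by linsolve2.
rewrite ev2_tens; last by linsolve2.
rewrite ev2_mul2; last by linsolve2.
rewrite ev2_tr [RHS]ev2_swap.
apply: ev2_eq => x y; apply: ev2_eq => x' y'.
rewrite !SM Sv !mA (vmid a) -!(mA v v) !vvmid.
by [].
Qed.

End Hop.

Theorem mainTheorem6 (K : fieldType) (n : nat) (H : HopfData K n)
  (R : 'M[K]_n) (v : 'rV[K]_n) :
  is_hopf H -> quasitriangular H R -> factorizable H R -> ribbon H R v ->
  forall a : 'rV[K]_n, transm_S H R (transm_S H R a) = right_adj H v a.
Proof.
move=> [hA [hU [hC [hCu [[hDm hD1] [[hem he1] [hS hSb]]]]]]].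
move=> [[Ri [RRi RiR QT]] [DR1 DR2]] _ [vc [_ [Sv [_ [[uv1 _] Dv]]]]] a.
case: hSb => Si SiS SSi.
have m1l : forall x, Defs.mulA H (oneA H) x = x := fun x => (hU x).1.
have m1r : forall x, Defs.mulA H x (oneA H) = x := fun x => (hU x).2.
have cu1 := fun x => (hCu x).1.
have cu2 := fun x => (hCu x).2.
have an1 := fun x => (hS x).1.
have an2 := fun x => (hS x).2.
by eapply main; eassumption.
Qed.
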